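(* Let $p,q\in\Bbbk^\times$. If $B(q)\cong B(p)$, then $p=q$.
   Context: $\Bbbk$ is an algebraically closed field of characteristic zero. Paths are written left to right. Let $Q$ be the quiver with vertices $e_1,e_2$, a loop $a$ at $e_1$, a loop $c$ at $e_2$, and arrows $b:e_1\to e_2$, $d:e_2\to e_1$; for $q\in\Bbbk^\times$, $B(q)=\Bbbk Q/(ab-bc,\ cd-q\,da)$. *)

(* Defs.v *)
From HB Require Import structures.
From mathcomp Require Import all_boot all_order all_algebra.
Set Implicit Arguments. Unset Strict Implicit. Unset Printing Implicit Defensive.
Import GRing.Theory.
Local Open Scope ring_scope.

Definition alg_hom (k : fieldType) (A R : algType k) (f : A -> R) : Prop :=
  [/\ forall x y : A, f (x + y) = f x + f y,
      forall (l : k) (x : A), f (l *: x) = l *: f x,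
      forall x y : A, f (x * y) = f x * f y
    & f 1 = 1].

Definition alg_iso (k : fieldType) (A R : algType k) : Prop :=
  exists f : A -> R, alg_hom f /\ bijective f.

(* Defining relations of B(q) in an algebra R, for the quiver Q with
   vertices e1 e2, loop a at e1, loop c at e2, b : e1 -> e2, d : e2 -> e1.
   Paths are written left to right, so an arrow x : i -> j satisfies
   x = e_i * x * e_j; the trivial paths e1, e2 form a complete set of
   orthogonal idempotents. *)
Definition B_rels (k : fieldType) (R : algType k) (q : k)
    (e1 e2 a b c d : R) : Prop :=
  [/\ [/\ e1 * e1 = e1, e2 * e2 = e2, e1 * e2 = 0, e2 * e1 = 0 & e1 + e2 = 1],
      [/\ a = e1 * a * e1, b = e1 * b * e2, c = e2 * c * e2 & d = e2 * d * e1]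
    & a * b = b * c /\ c * d = q *: (d * a)].

(* (A; e1,e2,a,b,c,d) is the algebra B(q) = kQ/(ab - bc, cd - q da):
   it satisfies the relations and is universal (initial) among k-algebras
   equipped with elements satisfying them. This characterizes kQ/I up to
   unique isomorphism (kQ is the free algebra on a complete set of orthogonal
   idempotents indexed by vertices and arrows x with x = e_s(x) x e_t(x)). *)
Definition is_B (k : fieldType) (A : algType k) (q : k)
    (e1 e2 a b c d : A) : Prop :=
  B_rels q e1 e2 a b c d /\
  forall (R : algType k) (e1' e2' a' b' c' d' : R),
    B_rels q e1' e2' a' b' c' d' ->
    (exists f : A -> R, alg_hom f /\
       [/\ f e1 = e1', f e2 = e2', f a = a' & [/\ f b = b', f c = c' & f d = d']])
    /\ (forall f g : A -> R, alg_hom f -> alg_hom g ->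
          [/\ f e1 = g e1, f e2 = g e2, f a = g a
            & [/\ f b = g b, f c = g c & f d = g d]] ->
          f =1 g).

(* Main.v *)
Require Import Defs.
From HB Require Import structures.
From mathcomp Require Import all_boot all_order all_algebra.
From mathcomp Require Import ring.
Set Implicit Arguments. Unset Strict Implicit. Unset Printing Implicit Defensive.
Import GRing.Theory.
Local Open Scope ring_scope.

Record W (k : fieldType) (q : k) := mkW { w1 : k; w2 : k; wa : k; wb : k; wc : k; wd : k; wm : k; wn : k }.
Arguments mkW {k q}.
Arguments w1 {k q}. Arguments w2 {k q}. Arguments wa {k q}. Arguments wb {k q}.
Arguments wc {k q}. Arguments wd {k q}. Arguments wm {k q}. Arguments wn {k q}.
Section WDef.
Variables (k : fieldType) (q : k).
Local Notation W := (W q).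

Definition toP (x : W) := (w1 x, w2 x, wa x, wb x, wc x, wd x, wm x, wn x).
Definition ofP (t : k * k * k * k * k * k * k * k) :=
  let: (a1, a2, a3, a4, a5, a6, a7, a8) := t in @mkW k q a1 a2 a3 a4 a5 a6 a7 a8.
Lemma toPK : cancel toP ofP. Proof. by case. Qed.
HB.instance Definition _ := Choice.copy W (can_type toPK).

Definition zeroW : W := mkW 0 0 0 0 0 0 0 0.
Definition oppW (x : W) : W := mkW (- w1 x) (- w2 x) (- wa x) (- wb x) (- wc x) (- wd x) (- wm x) (- wn x).
Definition addW (x y : W) : W := mkW (w1 x + w1 y) (w2 x + w2 y) (wa x + wa y) (wb x + wb y)
  (wc x + wc y) (wd x + wd y) (wm x + wm y) (wn x + wn y).

Lemma eqW (x y : W) : w1 x = w1 y -> w2 x = w2 y -> wa x = wa y -> wb x = wb y ->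
  wc x = wc y -> wd x = wd y -> wm x = wm y -> wn x = wn y -> x = y.
Proof. by case: x; case: y => /= ? ? ? ? ? ? ? ? ? ? ? ? ? ? ? ? -> -> -> -> -> -> -> ->. Qed.

Ltac solveW := move=> *; apply: eqW => /=; ring.

Lemma addWA : associative addW. Proof. solveW. Qed.
Lemma addWC : commutative addW. Proof. solveW. Qed.
Lemma add0W : left_id zeroW addW. Proof. solveW. Qed.
Lemma addNW : left_inverse zeroW oppW addW. Proof. solveW. Qed.
HB.instance Definition _ := GRing.isZmodule.Build W addWA addWC add0W addNW.

Definition oneW : W := mkW 1 1 0 0 0 0 0 0.
Definition mulW (x y : W) : W := mkW (w1 x * w1 y) (w2 x * w2 y)
  (w1 x * wa y + wa x * w1 y) (w1 x * wb y + wb x * w2 y)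
  (w2 x * wc y + wc x * w2 y) (w2 x * wd y + wd x * w1 y)
  (w1 x * wm y + wm x * w2 y + wa x * wb y + wb x * wc y)
  (w2 x * wn y + wn x * w1 y + q * wc x * wd y + wd x * wa y).

Lemma mulWA : associative mulW. Proof. solveW. Qed.
Lemma mul1W : left_id oneW mulW. Proof. solveW. Qed.
Lemma mulW1 : right_id oneW mulW. Proof. solveW. Qed.
Lemma mulWDl : left_distributive mulW addW. Proof. solveW. Qed.
Lemma mulWDr : right_distributive mulW addW. Proof. solveW. Qed.
Lemma oneW_neq0 : oneW != 0.
Proof. apply/eqP => /(congr1 w1) /= /eqP; by rewrite oner_eq0. Qed.
HB.instance Definition _ := GRing.Zmodule_isNzRing.Build W mulWA mul1W mulW1 mulWDl mulWDr oneW_neq0.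

Definition scaleW (l : k) (x : W) : W := mkW (l * w1 x) (l * w2 x) (l * wa x) (l * wb x)
  (l * wc x) (l * wd x) (l * wm x) (l * wn x).
Lemma scaleWA a b v : scaleW a (scaleW b v) = scaleW (a * b) v. Proof. solveW. Qed.
Lemma scale1W : left_id 1 scaleW. Proof. solveW. Qed.
Lemma scaleWDr : right_distributive scaleW +%R. Proof. solveW. Qed.
Lemma scaleWDl v : {morph scaleW^~ v: a b / a + b}. Proof. solveW. Qed.
HB.instance Definition _ := GRing.Zmodule_isLmodule.Build k W scaleWA scale1W scaleWDr scaleWDl.
Lemma scaleWAl (a : k) (u v : W) : a *: (u * v) = (a *: u) * v. Proof. solveW. Qed.
HB.instance Definition _ := GRing.Lmodule_isLalgebra.Build k W scaleWAl.
Lemma scaleWAr (a : k) (u v : W) : a *: (u * v) = u * (a *: v). Proof. solveW. Qed.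
HB.instance Definition _ := GRing.Lalgebra_isAlgebra.Build k W scaleWAr.


End WDef.

Record T (k : fieldType) := mkT { t1 : k; t2 : k; t3 : k }.
Arguments mkT {k}. Arguments t1 {k}. Arguments t2 {k}. Arguments t3 {k}.
Section TDef.
Variables (k : fieldType).
Local Notation T := (T k).
Definition toT (x : T) := (t1 x, t2 x, t3 x).
Definition ofT (t : k * k * k) := let: (a1, a2, a3) := t in mkT a1 a2 a3.
Lemma toTK : cancel toT ofT. Proof. by case. Qed.
HB.instance Definition _ := Choice.copy T (can_type toTK).
Lemma eqT (x y : T) : t1 x = t1 y -> t2 x = t2 y -> t3 x = t3 y -> x = y.
Proof. by case: x; case: y => /= ? ? ? ? ? ? -> -> ->. Qed.
Ltac solveT := move=> *; apply: eqT => /=; ring.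
Definition zeroT : T := mkT 0 0 0.
Definition oppT (x : T) : T := mkT (- t1 x) (- t2 x) (- t3 x).
Definition addT (x y : T) : T := mkT (t1 x + t1 y) (t2 x + t2 y) (t3 x + t3 y).
Lemma addTA : associative addT. Proof. solveT. Qed.
Lemma addTC : commutative addT. Proof. solveT. Qed.
Lemma add0T : left_id zeroT addT. Proof. solveT. Qed.
Lemma addNT : left_inverse zeroT oppT addT. Proof. solveT. Qed.
HB.instance Definition _ := GRing.isZmodule.Build T addTA addTC add0T addNT.
Definition oneT : T := mkT 1 0 1.
Definition mulT (x y : T) : T := mkT (t1 x * t1 y) (t1 x * t2 y + t2 x * t3 y) (t3 x * t3 y).
Lemma mulTA : associative mulT. Proof. solveT. Qed.
Lemma mul1T : left_id oneT mulT. Proof. solveT. Qed.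
Lemma mulT1 : right_id oneT mulT. Proof. solveT. Qed.
Lemma mulTDl : left_distributive mulT addT. Proof. solveT. Qed.
Lemma mulTDr : right_distributive mulT addT. Proof. solveT. Qed.
Lemma oneT_neq0 : oneT != 0.
Proof. apply/eqP => /(congr1 t1) /= /eqP; by rewrite oner_eq0. Qed.
HB.instance Definition _ := GRing.Zmodule_isNzRing.Build T mulTA mul1T mulT1 mulTDl mulTDr oneT_neq0.
Definition scaleT (l : k) (x : T) : T := mkT (l * t1 x) (l * t2 x) (l * t3 x).
Lemma scaleTA a b v : scaleT a (scaleT b v) = scaleT (a * b) v. Proof. solveT. Qed.
Lemma scale1T : left_id 1 scaleT. Proof. solveT. Qed.
Lemma scaleTDr : right_distributive scaleT +%R. Proof. solveT. Qed.
Lemma scaleTDl v : {morph scaleT^~ v: a b / a + b}. Proof. solveT. Qed.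
HB.instance Definition _ := GRing.Zmodule_isLmodule.Build k T scaleTA scale1T scaleTDr scaleTDl.
Lemma scaleTAl (a : k) (u v : T) : a *: (u * v) = (a *: u) * v. Proof. solveT. Qed.
HB.instance Definition _ := GRing.Lmodule_isLalgebra.Build k T scaleTAl.
Lemma scaleTAr (a : k) (u v : T) : a *: (u * v) = u * (a *: v). Proof. solveT. Qed.
HB.instance Definition _ := GRing.Lalgebra_isAlgebra.Build k T scaleTAr.
End TDef.

Section Reps.
Variables (k : fieldType) (q : k).
Definition hb (X : W q) : T k := mkT (w1 X) (wb X) (w2 X).
Definition hd (X : W q) : T k := mkT (w2 X) (wd X) (w1 X).
Definition ch (X : W q) : T k := mkT (w1 X) (wa X) (w1 X).
Lemma hb_hom : alg_hom hb.
Proof. split=> *; apply: eqT => /=; ring. Qed.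
Lemma hd_hom : alg_hom hd.
Proof. split=> *; apply: eqT => /=; ring. Qed.
Lemma ch_hom : alg_hom ch.
Proof. split=> *; apply: eqT => /=; ring. Qed.

Definition eW1 : W q := mkW 1 0 0 0 0 0 0 0.
Definition eW2 : W q := mkW 0 1 0 0 0 0 0 0.
Definition aW : W q := mkW 0 0 1 0 0 0 0 0.
Definition bW : W q := mkW 0 0 0 1 0 0 0 0.
Definition cW : W q := mkW 0 0 0 0 1 0 0 0.
Definition dW : W q := mkW 0 0 0 0 0 1 0 0.
Lemma relsW : B_rels q eW1 eW2 aW bW cW dW.
Proof.
split; [split|split|split]; apply: eqW => /=; ring.
Qed.
End Reps.

Section Abstract.
Variables (k : fieldType).

Lemma rels_hom (A R : algType k) (f : A -> R) (p : k) e1 e2 a b c d :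
  alg_hom f -> B_rels p e1 e2 a b c d ->
  B_rels p (f e1) (f e2) (f a) (f b) (f c) (f d).
Proof.
case=> fD fZ fM f1 [[h11 h22 h12 h21 h1] [ha hb hc hd] [hab hcd]].
have f0 : f 0 = 0.
  by apply: (addrI (f 0)); rewrite -fD !addr0.
split; split; rewrite -?fM -?fD -?fZ ?h11 ?h22 ?h12 ?h21 ?h1 ?f0 ?f1 //.
- by rewrite -ha.
- by rewrite -hb.
- by rewrite -hc.
- by rewrite -hd.
- by rewrite hab.
- by rewrite hcd.
Qed.

Lemma comp_hom (A B R : algType k) (f : A -> B) (g : B -> R) :
  alg_hom f -> alg_hom g -> alg_hom (g \o f).
Proof.
case=> fD fZ fM f1 [gD gZ gM g1]; split=> /= *.
- by rewrite fD gD.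
- by rewrite fZ gZ.
- by rewrite fM gM.
- by rewrite f1 g1.
Qed.

Lemma inv_hom (A B : algType k) (f : A -> B) (g : B -> A) :
  alg_hom f -> cancel f g -> cancel g f -> alg_hom g.
Proof.
case=> fD fZ fM f1 fK gK; split=> *.
- by apply: (can_inj fK); rewrite fD !gK.
- by apply: (can_inj fK); rewrite fZ !gK.
- by apply: (can_inj fK); rewrite fM !gK.
- by apply: (can_inj fK); rewrite f1 gK.
Qed.

Lemma uniq_conj (A R : algType k) (p : k) e1 e2 a b c d (tau : A -> R) (M M' : R) :
  is_B p e1 e2 a b c d -> alg_hom tau -> M * M' = 1 -> M' * M = 1 ->
  [/\ M * tau e1 = tau e1 * M, M * tau e2 = tau e2 * M, M * tau a = tau a * M
    & [/\ M * tau b = tau b * M, M * tau c = tau c * M & M * tau d = tau d * M]] ->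
  forall x, M * tau x = tau x * M.
Proof.
move=> [Hr Hu] htau HMM' HM'M Hc.
have [tD tZ tM t1] := htau.
pose g x := M * tau x * M'.
have hg : alg_hom g.
  rewrite /g; split=> [x y|l x|x y|].
  - by rewrite tD mulrDr mulrDl.
  - by rewrite tZ -scalerAr -scalerAl.
  - by rewrite tM !mulrA -[M * tau x * M' * M]mulrA HM'M mulr1.
  - by rewrite t1 mulr1 HMM'.
have key y : M * tau y = tau y * M -> tau y = g y.
  by move=> h; rewrite /g h -mulrA HMM' mulr1.
have [Ha1 Ha2 Haa [Hab Hac Had]] := Hc.
have eq := (Hu R _ _ _ _ _ _ (rels_hom htau Hr)).2 tau g htau hg.
have := eq (And4 (key _ Ha1) (key _ Ha2) (key _ Haa) (And3 (key _ Hab) (key _ Hac) (key _ Had)))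
  => {}eq x.
by rewrite {2}eq /g -!mulrA HM'M mulr1.
Qed.
End Abstract.


Section Key.
Variables (k : fieldType).
Lemma lin_sol (P Q : k) (H : P = Q) (c x e : k) : x - e = c * (P - Q) -> x = e.
Proof. by move: H => -> /eqP; rewrite subrr mulr0 subr_eq0 => /eqP. Qed.
Lemma lin_can (P Q : k) (H : P = Q) (c w x e : k) : w != 0 -> (x - e) * w = c * (P - Q) -> x = e.
Proof.
move: H => -> hw /eqP; rewrite subrr mulr0 mulf_eq0 (negbTE hw) orbF subr_eq0.
by move/eqP.
Qed.
Lemma lin_can2 (P Q P' Q' : k) (H : P = Q) (H' : P' = Q') (c c' w x e : k) : w != 0 ->
  (x - e) * w = c * (P - Q) + c' * (P' - Q') -> x = e.
Proof.
move: H H' => -> -> hw /eqP; rewrite !subrr !mulr0 addr0 mulf_eq0 (negbTE hw) orbF subr_eq0.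
by move/eqP.
Qed.
Lemma idem01 (x : k) : x * x = x -> x = 0 \/ x = 1.
Proof.
move=> h; have : x * (x - 1) = 0 by rewrite mulrBr h mulr1 subrr.
by move/eqP; rewrite mulf_eq0 subr_eq0 => /orP [/eqP|/eqP]; [left|right].
Qed.
Lemma nzc (c P Q : k) : c != 0 -> P = Q -> P - Q = c -> False.
Proof. by move=> hc e; rewrite e subrr => /esym /eqP; rewrite (negbTE hc). Qed.
Lemma m1_neq0 : (-1 : k) != 0. Proof. by rewrite oppr_eq0 oner_eq0. Qed.
Lemma m2_neq0 : (2 : k) != 0 -> (-2 : k) != 0. Proof. by rewrite oppr_eq0. Qed.

Lemma degen (h2 : (2:k) != 0) (x y z : k) :
  exists M M' : T k, [/\ M * M' = 1, M' * M = 1, M * mkT x y z = mkT x y z * M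
    & ~ (M * mkT 1 0 0 = mkT 1 0 0 * M /\ M * mkT 0 1 0 = mkT 0 1 0 * M)].
Proof.
case: (eqVneq x z) => [<-|hxz].
  exists (mkT 1 1 1), (mkT 1 (-1) 1); split; try (apply: eqT => /=; ring).
  case=> H _; apply: (nzc m1_neq0 (congr1 t2 H)) => /=.
  ring.
have hxz' : x - z != 0 by rewrite subr_eq0.
set t := y / (x - z).
have ht : y = t * (x - z) by rewrite /t divfK.
exists (mkT 1 (2 * t) (-1)), (mkT 1 (2 * t) (-1)); split; try (apply: eqT => /=; ring).
  apply: eqT => /=; rewrite ?ht; ring.
case=> _ H; apply: (nzc h2 (congr1 t2 H)) => /=.
ring.
Qed.
End Key.

Tactic Notation "fact" uconstr(cst) constr(H) uconstr(fn) :=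
  refine (lin_sol (congr1 fn H) (c:=cst) _); rewrite /=; ring.
Tactic Notation "factc" uconstr(cst) constr(hw) constr(H) uconstr(fn) :=
  refine (lin_can (congr1 fn H) (c:=cst) hw _); rewrite /=; ring.
Ltac commT := apply: eqT => /=; ring.
Ltac comm6 := split; [commT|commT|commT|split; commT].

Lemma key (k : fieldType) (q p : k) (h2 : (2:k) != 0) (hpq : p != q) (E1 E2 A B C D : W q) :
  B_rels p E1 E2 A B C D ->
  exists (rho : W q -> T k) (M M' : T k), alg_hom rho /\ M * M' = 1 /\ M' * M = 1 /\
   [/\ M * rho E1 = rho E1 * M, M * rho E2 = rho E2 * M, M * rho A = rho A * M
    & [/\ M * rho B = rho B * M, M * rho C = rho C * M & M * rho D = rho D * M]] /\
   ~ [/\ M * rho (eW1 q) = rho (eW1 q) * M, M * rho (aW q) = rho (aW q) * M,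
         M * rho (bW q) = rho (bW q) * M & M * rho (dW q) = rho (dW q) * M].
Proof.
case: E1 => u1 u2 ua ub uc ud um un; case: E2 => v1 v2 va vb vc vd vm vn.
case: A => a1 a2 aa ab ac ad am an; case: B => b1 b2 ba bb bc bd bm bn.
case: C => c1 c2 ca cb cc cd cm cn; case: D => d1 d2 da db dc dd dm dn.
move=> [[h11 h22 h12 h21 h1] [hA hB hC hD] [hAB hCD]].
have ? : v1 = 1 - u1 by fact 1 h1 w1.
have ? : v2 = 1 - u2 by fact 1 h1 w2.
have ? : va = - ua by fact 1 h1 wa.
have ? : vb = - ub by fact 1 h1 wb.
have ? : vc = - uc by fact 1 h1 wc.
have ? : vd = - ud by fact 1 h1 wd.
have ? : vm = - um by fact 1 h1 wm.
have ? : vn = - un by fact 1 h1 wn.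
subst v1 v2 va vb vc vd vm vn.
have := congr1 w1 h11; rewrite /= => /idem01 [] ?; subst u1;
have := congr1 w2 h11; rewrite /= => /idem01 [] ?; subst u2.
- (* E1 = 0 *)
  have ? : ua = 0 by fact (-1) h11 wa.
  have ? : ub = 0 by fact (-1) h11 wb.
  have ? : uc = 0 by fact (-1) h11 wc.
  have ? : ud = 0 by fact (-1) h11 wd.
  subst ua ub uc ud.
  have ? : um = 0 by fact (-1) h11 wm.
  have ? : un = 0 by fact (-1) h11 wn.
  subst um un.
  have ? : a1 = 0 by fact 1 hA w1.
  have ? : a2 = 0 by fact 1 hA w2.
  have ? : ab = 0 by fact 1 hA wb.
  have ? : b1 = 0 by fact 1 hB w1.
  have ? : b2 = 0 by fact 1 hB w2.
  have ? : bb = 0 by fact 1 hB wb.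
  have ? : d1 = 0 by fact 1 hD w1.
  have ? : d2 = 0 by fact 1 hD w2.
  have ? : db = 0 by fact 1 hD wb.
  subst a1 a2 ab b1 b2 bb d1 d2 db.
  have [M [M' [HMM' HM'M HX Hn]]] := degen h2 c1 cb c2.
  exists (@hb k q), M, M'.
  split; first exact: hb_hom. split; first done. split; first done.
  split; first by split; [commT|commT|commT|split; [commT|exact: HX|commT]].
  by case=> H1 _ H3 _; apply: Hn; split; [exact: H1|exact: H3].
- (* E1 ~ e2 *)
  have ? : ua = 0 by fact (-1) h11 wa.
  have ? : uc = 0 by fact 1 h11 wc.
  subst ua uc.
  have ? : a1 = 0 by fact 1 hA w1.
  have ? : ab = ub * a2 by fact 1 hA wb.
  have ? : ad = a2 * ud by fact 1 hA wd.
  have ? : aa = 0 by fact 1 hA wa.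
  have ? : b1 = 0 by fact 1 hB w1.
  have ? : b2 = 0 by fact 1 hB w2.
  have ? : ba = 0 by fact 1 hB wa.
  have ? : bb = 0 by fact 1 hB wb.
  have ? : bc = 0 by fact 1 hB wc.
  have ? : c2 = 0 by fact 1 hC w2.
  have ? : cb = - (c1 * ub) by fact 1 hC wb.
  have ? : cd = - (ud * c1) by fact 1 hC wd.
  have ? : d1 = 0 by fact 1 hD w1.
  have ? : d2 = 0 by fact 1 hD w2.
  have ? : da = 0 by fact 1 hD wa.
  have ? : dc = 0 by fact 1 hD wc.
  have ? : dd = 0 by fact 1 hD wd.
  subst a1 ab ad aa b1 b2 ba bb bc c2 cb cd d1 d2 da dc dd.
  case: (eqVneq bd 0) => [?|hbd].
    subst bd.
    exists (@hd k q), (mkT 1 (2 * ud) (-1)), (mkT 1 (2 * ud) (-1)).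
    split; first exact: hd_hom.
    split; first commT. split; first commT.
    split; first comm6.
    by case=> _ _ _ H; apply: (nzc h2 (congr1 t2 H)) => /=; ring.
  case: (eqVneq db 0) => [?|hdb].
    subst db.
    exists (@hb k q), (mkT (-1) (2 * ub) 1), (mkT (-1) (2 * ub) 1).
    split; first exact: hb_hom.
    split; first commT. split; first commT.
    split; first comm6.
    by case=> _ _ H _; apply: (nzc (m2_neq0 h2) (congr1 t2 H)) => /=; ring.
  have ? : a2 = c1 by factc 1 hbd hAB wd.
  subst a2.
  have ? : ca = q * ac by factc (-1) hbd hAB wn.
  subst ca.
  have hc1 : c1 = p * c1 by factc 1 hdb hCD wb.
  have ? : ac = 0.
    have hw : db * (q - p) != 0 by rewrite mulf_neq0 // subr_eq0 eq_sym.
    refine (lin_can2 (congr1 wm hCD) hc1 (c:=1) (c':=-dm) hw _).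
    rewrite /=; ring.
  subst ac.
  exists (@ch k q), (mkT 1 0 (-1)), (mkT 1 0 (-1)).
  split; first exact: ch_hom.
  split; first commT. split; first commT.
  split; first comm6.
  by case=> _ H _ _; apply: (nzc h2 (congr1 t2 H)) => /=; ring.
- (* E1 ~ e1 *)
  have ? : ua = 0 by fact 1 h11 wa.
  have ? : uc = 0 by fact (-1) h11 wc.
  subst ua uc.
  have ? : a2 = 0 by fact 1 hA w2.
  have ? : ab = a1 * ub by fact 1 hA wb.
  have ? : ad = ud * a1 by fact 1 hA wd.
  have ? : b1 = 0 by fact 1 hB w1.
  have ? : b2 = 0 by fact 1 hB w2.
  have ? : ba = 0 by fact 1 hB wa.
  have ? : bc = 0 by fact 1 hB wc.
  have ? : bd = 0 by fact 1 hB wd.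
  have ? : c1 = 0 by fact 1 hC w1.
  have ? : cb = - (ub * c2) by fact 1 hC wb.
  have ? : cd = - (ud * c2) by fact 1 hC wd.
  have ? : ca = 0 by fact 1 hC wa.
  have ? : d1 = 0 by fact 1 hD w1.
  have ? : d2 = 0 by fact 1 hD w2.
  have ? : db = 0 by fact 1 hD wb.
  have ? : da = 0 by fact 1 hD wa.
  have ? : dc = 0 by fact 1 hD wc.
  subst a2 ab ad b1 b2 ba bc bd c1 cb cd ca d1 d2 db da dc.
  case: (eqVneq bb 0) => [?|hbb].
    subst bb.
    exists (@hb k q), (mkT 1 (2 * ub) (-1)), (mkT 1 (2 * ub) (-1)).
    split; first exact: hb_hom.
    split; first commT. split; first commT.
    split; first comm6.
    by case=> _ _ H _; apply: (nzc h2 (congr1 t2 H)) => /=; ring.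
  case: (eqVneq dd 0) => [?|hdd].
    subst dd.
    exists (@hd k q), (mkT (-1) (2 * ud) 1), (mkT (-1) (2 * ud) 1).
    split; first exact: hd_hom.
    split; first commT. split; first commT.
    split; first comm6.
    by case=> _ _ _ H; apply: (nzc (m2_neq0 h2) (congr1 t2 H)) => /=; ring.
  have ? : a1 = c2 by factc 1 hbb hAB wb.
  subst a1.
  have ? : aa = cc by factc 1 hbb hAB wm.
  subst aa.
  have hc2 : c2 = p * c2 by factc 1 hdd hCD wd.
  have ? : cc = 0.
    have hw : dd * (q - p) != 0 by rewrite mulf_neq0 // subr_eq0 eq_sym.
    refine (lin_can2 (congr1 wn hCD) hc2 (c:=1) (c':=-dn) hw _).
    rewrite /=; ring.
  subst cc.
  exists (@ch k q), (mkT 1 0 (-1)), (mkT 1 0 (-1)).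
  split; first exact: ch_hom.
  split; first commT. split; first commT.
  split; first comm6.
  by case=> _ H _ _; apply: (nzc h2 (congr1 t2 H)) => /=; ring.
- (* E1 = 1 *)
  have ? : ua = 0 by fact 1 h22 wa.
  have ? : ub = 0 by fact 1 h22 wb.
  have ? : uc = 0 by fact 1 h22 wc.
  have ? : ud = 0 by fact 1 h22 wd.
  subst ua ub uc ud.
  have ? : um = 0 by fact 1 h22 wm.
  have ? : un = 0 by fact 1 h22 wn.
  subst um un.
  have ? : b1 = 0 by fact 1 hB w1.
  have ? : b2 = 0 by fact 1 hB w2.
  have ? : bb = 0 by fact 1 hB wb.
  have ? : c1 = 0 by fact 1 hC w1.
  have ? : c2 = 0 by fact 1 hC w2.
  have ? : cb = 0 by fact 1 hC wb.
  have ? : d1 = 0 by fact 1 hD w1.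
  have ? : d2 = 0 by fact 1 hD w2.
  have ? : db = 0 by fact 1 hD wb.
  subst b1 b2 bb c1 c2 cb d1 d2 db.
  have [M [M' [HMM' HM'M HX Hn]]] := degen h2 a1 ab a2.
  exists (@hb k q), M, M'.
  split; first exact: hb_hom. split; first done. split; first done.
  split; first by split; [commT|commT|exact: HX|split; commT].
  by case=> H1 _ H3 _; apply: Hn; split; [exact: H1|exact: H3].
Qed.


Theorem corollary2p11 (k : closedFieldType) (hchar : [pchar k] =i pred0)
    (p q : k) (hp : p != 0) (hq : q != 0)
    (Bq : algType k) (e1 e2 a b c d : Bq)
    (Bp : algType k) (f1 f2 a' b' c' d' : Bp) :
  is_B q e1 e2 a b c d -> is_B p f1 f2 a' b' c' d' ->
  alg_iso Bq Bp -> p = q.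
Proof.
move=> HBq HBp [phi [hphi [phi' phiK phi'K]]].
apply/eqP/negPn/negP => hpq.
have h2 : (2:k) != 0 by rewrite ((pcharf0P k).1 hchar 2).
have [psi [hpsi [ps1 ps2 psa [psb psc psd]]]] :=
  (HBq.2 (W q) _ _ _ _ _ _ (relsW q)).1.
have hphi' : alg_hom phi' := inv_hom hphi phiK phi'K.
have hth : alg_hom (psi \o phi') := comp_hom hphi' hpsi.
have Hs := rels_hom hth HBp.1.
have [rho [M [M' [hrho [HMM' [HM'M [Hcomm Hnot]]]]]]] := key h2 hpq Hs.
apply: Hnot.
have Hall := uniq_conj HBp (comp_hom hth hrho) HMM' HM'M Hcomm.
have E x : rho (psi x) = rho ((psi \o phi') (phi x)) by rewrite /= phiK.
have G x : M * rho (psi x) = rho (psi x) * M by rewrite (E x); apply: Hall.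
by rewrite -ps1 -psa -psb -psd; split; apply: G.
Qed.
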